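(* Let $P:\mathcal{C}^{\mathrm{op}}\to\mathbf{Pos}$ be a Gödel doctrine. Then for all objects $I,U,X,V,Y$ of $\mathcal{C}$ and all quantifier-free predicates $\psi_D\in P(I\times U\times X)$ and $\phi_D\in P(I\times V\times Y)$ we have \[ i:I\;|\;\exists u.\forall x.\,\psi_D(i,u,x)\vdash\exists v.\forall y.\,\phi_D(i,v,y)\] if and only if there exist arrows $f_0:I\times U\to V$ and $f_1:I\times U\times Y\to X$ of $\mathcal{C}$ such that \[ u:U,y:Y,i:I\;|\;\psi_D(i,u,f_1(i,u,y))\vdash\phi_D(i,f_0(i,u),y).\]
   Context: A doctrine is a functor $P:\mathcal{C}^{\mathrm{op}}\to\mathbf{Pos}$ where $\mathcal{C}$ has finite products; $P_f$ denotes reindexing along $f$. $P$ is existential (resp. universal) if for every product projection $\pi_i:A_1\times A_2\to A_i$ the map $P_{\pi_i}$ has a left adjoint $\exists_{\pi_i}$ (resp. right adjoint $\forall_{\pi_i}$) satisfying Beck–Chevalley: for every pullback of a projection $\pi:X\to A$ along $f:A'\to A$, with projection $\pi':X'\to A'$ and $f':X'\to X$, $\exists_{\pi'}P_{f'}\beta=P_f\exists_\pi\beta$ (resp. $\forall_{\pi'}P_{f'}\beta=P_f\forall_\pi\beta$). Notation: $a_1:A_1,\dots,a_n:A_n\;|\;\phi\vdash\psi$ means $\phi\le\psi$ in $P(A_1\times\dots\times A_n)$; $\exists b.\psi(a,b)$, $\forall b.\psi(a,b)$ denote $\exists_{\pi_A}\psi$, $\forall_{\pi_A}\psi$; substitution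 of terms (arrows) is reindexing. In an existential doctrine, $\alpha\in P(A)$ is an existential splitting if for every $B$ and $\beta\in P(A\times B)$ with $\alpha\le\exists_{\pi_A}\beta$ there is $g:A\to B$ with $\alpha\le P_{\langle1_A,g\rangle}\beta$; $\alpha\in P(I)$ is existential-free if $P_f\alpha$ is an existential splitting for all $f:A\to I$. In a universal doctrine $Q$, $\alpha\in Q(A)$ is a universal splitting if for every $B$ and $\beta\in Q(A\times B)$ with $\forall_{\pi_A}\beta\le\alpha$ there is $g:A\to B$ with $Q_{\langle1_A,g\rangle}\beta\le\alpha$; $\alpha\in Q(I)$ is universal-free if $Q_f\alpha$ is a universal splitting for all $f:A\to I$. Enough existential-free (resp. universal-free) predicates: every $\alpha\in P(I)$ equals $\exists_{\pi_I}\beta$ (resp. $\forall_{\pi_I}\beta$) for some object $A$ and existential-free (resp. universal-free) $\beta\in P(I\times A)$. A Gödel doctrine is a doctrine $P$ such that: (1) $\mathcal{C}$ is cartesian closed; (2) $P$ is existential and universal; (3) $P$ has enough existential-free predicates; (4) if $\alpha$ is existential-free then $\forall_\pi\alpha$ is existential-free for every projection $\pi$; (5) the sub-doctrine $P'$ of existential-free predicates (universal by (4)) has enough universal-free predicates. A predicate is quantifier-free if it is existential-free in $P$ and universal-free in $P'$. *)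

(* Defs.v *)
Set Implicit Arguments.
Unset Strict Implicit.

Record FPCat := {
  ob : Type;
  hom : ob -> ob -> Type;
  idm : forall A, hom A A;
  comp : forall A B D, hom B D -> hom A B -> hom A D;
  comp_id_l : forall A B (f : hom A B), comp (idm B) f = f;
  comp_id_r : forall A B (f : hom A B), comp f (idm A) = f;
  comp_assoc : forall A B D E (h : hom D E) (g : hom B D) (f : hom A B),
      comp h (comp g f) = comp (comp h g) f;
  one : ob;
  bang : forall A, hom A one;
  bang_uniq : forall A (f : hom A one), f = bang A;
  prod : ob -> ob -> ob;
  pi1 : forall A B, hom (prod A B) A;
  pi2 : forall A B, hom (prod A B) B;
  pair : forall Z A B, hom Z A -> hom Z B -> hom Z (prod A B);
  pi1_pair : forall Z A B (f : hom Z A) (g : hom Z B), comp (pi1 A B) (pair f g) = f;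
  pi2_pair : forall Z A B (f : hom Z A) (g : hom Z B), comp (pi2 A B) (pair f g) = g;
  pair_uniq : forall Z A B (h : hom Z (prod A B)),
      h = pair (comp (pi1 A B) h) (comp (pi2 A B) h)
}.

Arguments hom : clear implicits.
Arguments idm {_} A.
Arguments comp {_ A B D} _ _.
Arguments bang {_} A.
Arguments prod {_} _ _.
Arguments pi1 {_} A B.
Arguments pi2 {_} A B.
Arguments pair {_ Z A B} _ _.
Arguments one {_}.

Definition prodmap {C : FPCat} {A A' B B' : ob C} (f : hom C A A') (g : hom C B B')
  : hom C (prod A B) (prod A' B') :=
  pair (comp f (pi1 A B)) (comp g (pi2 A B)).

Record Exponentials (C : FPCat) := {
  expo : ob C -> ob C -> ob C;
  ev : forall A B, hom C (prod (expo A B) A) B;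
  lam : forall Z A B, hom C (prod Z A) B -> hom C Z (expo A B);
  ev_lam : forall Z A B (f : hom C (prod Z A) B),
      comp (ev A B) (prodmap (lam f) (idm A)) = f;
  lam_uniq : forall Z A B (g : hom C Z (expo A B)),
      g = lam (comp (ev A B) (prodmap g (idm A)))
}.

Record Doctrine (C : FPCat) := {
  pred : ob C -> Type;
  ple : forall A, pred A -> pred A -> Prop;
  ple_refl : forall A (a : pred A), ple a a;
  ple_trans : forall A (a b c : pred A), ple a b -> ple b c -> ple a c;
  ple_antisym : forall A (a b : pred A), ple a b -> ple b a -> a = b;
  reidx : forall A B, hom C A B -> pred B -> pred A;
  reidx_mono : forall A B (f : hom C A B) (a b : pred B), ple a b -> ple (reidx f a) (reidx f b);
  reidx_id : forall A (a : pred A), reidx (idm A) a = a;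
  reidx_comp : forall A B D (f : hom C A B) (g : hom C B D) (a : pred D),
      reidx (comp g f) a = reidx f (reidx g a)
}.

Arguments pred {_} _ _.
Arguments ple {_ _ A} _ _.
Arguments reidx {_ _ A B} _ _.

Record ExistentialStr (C : FPCat) (P : Doctrine C) := {
  ex1 : forall A B, pred P (prod A B) -> pred P A;
  ex1_adj : forall A B (b : pred P (prod A B)) (a : pred P A),
      ple (ex1 b) a <-> ple b (reidx (pi1 A B) a);
  ex1_BC : forall A A' B (f : hom C A' A) (b : pred P (prod A B)),
      ex1 (reidx (prodmap f (idm B)) b) = reidx f (ex1 b);
  ex2 : forall A B, pred P (prod A B) -> pred P B;
  ex2_adj : forall A B (b : pred P (prod A B)) (a : pred P B),
      ple (ex2 b) a <-> ple b (reidx (pi2 A B) a);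
  ex2_BC : forall A B B' (f : hom C B' B) (b : pred P (prod A B)),
      ex2 (reidx (prodmap (idm A) f) b) = reidx f (ex2 b)
}.

Record UniversalStr (C : FPCat) (P : Doctrine C) := {
  all1 : forall A B, pred P (prod A B) -> pred P A;
  all1_adj : forall A B (b : pred P (prod A B)) (a : pred P A),
      ple a (all1 b) <-> ple (reidx (pi1 A B) a) b;
  all1_BC : forall A A' B (f : hom C A' A) (b : pred P (prod A B)),
      all1 (reidx (prodmap f (idm B)) b) = reidx f (all1 b);
  all2 : forall A B, pred P (prod A B) -> pred P B;
  all2_adj : forall A B (b : pred P (prod A B)) (a : pred P B),
      ple a (all2 b) <-> ple (reidx (pi2 A B) a) b;
  all2_BC : forall A B B' (f : hom C B' B) (b : pred P (prod A B)),
      all2 (reidx (prodmap (idm A) f) b) = reidx f (all2 b)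
}.

Arguments ex1 {_ _} _ {A B} _.
Arguments ex2 {_ _} _ {A B} _.
Arguments all1 {_ _} _ {A B} _.
Arguments all2 {_ _} _ {A B} _.

Section Godel.
Context {C : FPCat} {P : Doctrine C} (E : ExistentialStr P) (U : UniversalStr P).

Definition ex_splitting {A : ob C} (a : pred P A) : Prop :=
  forall (B : ob C) (b : pred P (prod A B)),
    ple a (ex1 E b) -> exists g : hom C A B, ple a (reidx (pair (idm A) g) b).

Definition ex_free {I : ob C} (a : pred P I) : Prop :=
  forall (A : ob C) (f : hom C A I), ex_splitting (reidx f a).

Definition enough_ex_free : Prop :=
  forall (I : ob C) (a : pred P I),
    exists (A : ob C) (b : pred P (prod I A)), ex_free b /\ a = ex1 E b.

Definition all_preserves_ex_free : Prop :=
  forall (A B : ob C) (a : pred P (prod A B)),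
    ex_free a -> ex_free (all1 U a) /\ ex_free (all2 U a).

(* In the sub-doctrine P' of existential-free predicates (whose universal
   quantifiers are the restrictions of those of P, by condition (4)). *)
Definition un_splitting' {A : ob C} (a : pred P A) : Prop :=
  forall (B : ob C) (b : pred P (prod A B)), ex_free b ->
    ple (all1 U b) a -> exists g : hom C A B, ple (reidx (pair (idm A) g) b) a.

(* universal-free in P' (in particular, an element of P') *)
Definition un_free' {I : ob C} (a : pred P I) : Prop :=
  ex_free a /\ forall (A : ob C) (f : hom C A I), un_splitting' (reidx f a).

Definition enough_un_free' : Prop :=
  forall (I : ob C) (a : pred P I), ex_free a ->
    exists (A : ob C) (b : pred P (prod I A)), un_free' b /\ a = all1 U b.

Definition quantifier_free {I : ob C} (a : pred P I) : Prop :=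
  ex_free a /\ un_free' a.

(* Gödel doctrine: (1) C cartesian closed, (2) given by E and U,
   (3) enough existential-free, (4) forall preserves existential-free,
   (5) P' has enough universal-free predicates. *)
Definition godel_doctrine : Prop :=
  inhabited (Exponentials C) /\ enough_ex_free /\ all_preserves_ex_free /\ enough_un_free'.

End Godel.

(* Main.v *)
Require Import Defs.

Section Aux.
Context {C : FPCat}.

Lemma comp_pair (Z A B W : ob C) (f : hom C Z A) (g : hom C Z B) (h : hom C W Z) :
  comp (pair f g) h = pair (comp f h) (comp g h).
Proof.
  rewrite (pair_uniq (comp (pair f g) h)).
  rewrite !comp_assoc, pi1_pair, pi2_pair. reflexivity.
Qed.

Lemma pair_eta (A B : ob C) : pair (pi1 A B) (pi2 A B) = idm (prod A B).
Proof.
  rewrite (pair_uniq (idm (prod A B))). rewrite !comp_id_r. reflexivity.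
Qed.
Lemma pair_eta_h (Z A B : ob C) (h : hom C Z (prod A B)) :
  pair (comp (pi1 A B) h) (comp (pi2 A B) h) = h.
Proof. symmetry; apply pair_uniq. Qed.
End Aux.

Ltac norm := unfold prodmap; repeat (rewrite ?comp_pair, <- ?comp_assoc, ?pi1_pair, ?pi2_pair,
   ?comp_id_l, ?comp_id_r, ?pair_eta, ?pair_eta_h).

Theorem theorem2 (C : FPCat) (P : Doctrine C) (E : ExistentialStr P) (U : UniversalStr P)
  (HG : godel_doctrine E U)
  (I Uo X V Y : ob C)
  (psi : pred P (prod (prod I Uo) X)) (phi : pred P (prod (prod I V) Y))
  (Hpsi : quantifier_free E U psi) (Hphi : quantifier_free E U phi) :
  ple (ex1 E (all1 U psi)) (ex1 E (all1 U phi)) <->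
  exists (f0 : hom C (prod I Uo) V) (f1 : hom C (prod (prod I Uo) Y) X),
    (* context  u:Uo, y:Y, i:I  is the object (Uo x Y) x I *)
    let i := pi2 (prod Uo Y) I in
    let u := comp (pi1 Uo Y) (pi1 (prod Uo Y) I) in
    let y := comp (pi2 Uo Y) (pi1 (prod Uo Y) I) in
    ple (reidx (pair (pair i u) (comp f1 (pair (pair i u) y))) psi)
        (reidx (pair (pair i (comp f0 (pair i u))) y) phi).
Proof.
  set (m := pair (pair (pi2 (prod Uo Y) I) (comp (pi1 Uo Y) (pi1 (prod Uo Y) I)))
                 (comp (pi2 Uo Y) (pi1 (prod Uo Y) I))).
  set (m' := pair (pair (comp (pi2 I Uo) (pi1 (prod I Uo) Y)) (pi2 (prod I Uo) Y))
                  (comp (pi1 I Uo) (pi1 (prod I Uo) Y))).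
  assert (Hmm : comp m m' = idm _).
  { unfold m, m'. norm. reflexivity. }
  assert (Htr : forall f0 f1,
    ple (reidx (pair (pi1 (prod I Uo) Y) f1) psi) (reidx (prodmap (pair (pi1 I Uo) f0) (idm Y)) phi)
    <->
    (let i := pi2 (prod Uo Y) I in
    let u := comp (pi1 Uo Y) (pi1 (prod Uo Y) I) in
    let y := comp (pi2 Uo Y) (pi1 (prod Uo Y) I) in
    ple (reidx (pair (pair i u) (comp f1 (pair (pair i u) y))) psi)
        (reidx (pair (pair i (comp f0 (pair i u))) y) phi))).
  { intros f0 f1; cbv zeta.
    assert (E1 : comp (pair (pi1 (prod I Uo) Y) f1) m = pair (pair (pi2 (prod Uo Y) I) (comp (pi1 Uo Y) (pi1 (prod Uo Y) I))) (comp f1 m)).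
    { unfold m at 1. norm. reflexivity. }
    assert (E2 : comp (prodmap (pair (pi1 I Uo) f0) (idm Y)) m = pair (pair (pi2 (prod Uo Y) I) (comp f0 (pair (pi2 (prod Uo Y) I) (comp (pi1 Uo Y) (pi1 (prod Uo Y) I))))) (comp (pi2 Uo Y) (pi1 (prod Uo Y) I))).
    { unfold m. norm. reflexivity. }
    split; intro H.
    - apply (reidx_mono m) in H. rewrite <- !reidx_comp in H. rewrite E1, E2 in H. exact H.
    - apply (reidx_mono m') in H. fold m in H. rewrite <- E1, <- E2 in H.
      rewrite <- !reidx_comp in H. rewrite <- !comp_assoc, Hmm, !comp_id_r in H. exact H. }
  destruct HG as [_ [_ [Hall _]]].
  destruct Hpsi as [Hpsiex _]. destruct Hphi as [_ [_ Hun]].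
  split.
  - intro H.
    apply (ex1_adj E) in H.
    rewrite <- (ex1_BC E) in H.
    pose proof (proj1 (Hall _ _ psi Hpsiex) (prod I Uo) (idm _)) as Hs.
    rewrite reidx_id in Hs.
    destruct (Hs V _ H) as [g Hg].
    rewrite <- reidx_comp in Hg.
    assert (Eg : comp (prodmap (pi1 I Uo) (idm V)) (pair (idm (prod I Uo)) g) = pair (pi1 I Uo) g)
      by (norm; reflexivity).
    rewrite Eg, <- (all1_BC U) in Hg.
    apply (all1_adj U) in Hg.
    rewrite <- (all1_BC U) in Hg.
    assert (Hex : ex_free E (reidx (prodmap (pi1 (prod I Uo) Y) (idm X)) psi)).
    { intros A f. rewrite <- reidx_comp. apply Hpsiex. }
    destruct (Hun _ (prodmap (pair (pi1 I Uo) g) (idm Y)) X _ Hex Hg) as [g1 Hg1].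
    rewrite <- reidx_comp in Hg1.
    assert (Eg1 : comp (prodmap (pi1 (prod I Uo) Y) (idm X)) (pair (idm _) g1) = pair (pi1 (prod I Uo) Y) g1)
      by (norm; reflexivity).
    rewrite Eg1 in Hg1.
    exists g, g1. apply Htr. exact Hg1.
  - intros [f0 [f1 H]]. apply Htr in H.
    apply (ex1_adj E).
    apply ple_trans with (reidx (pair (pi1 I Uo) f0) (all1 U phi)).
    + rewrite <- (all1_BC U). apply (all1_adj U).
      apply ple_trans with (2 := H).
      apply ple_trans with (reidx (pair (pi1 (prod I Uo) Y) f1) (reidx (pi1 (prod I Uo) X) (all1 U psi))).
      * rewrite <- reidx_comp, pi1_pair. apply ple_refl.
      * apply reidx_mono. apply (all1_adj U). apply ple_refl.
    + apply ple_trans with (reidx (pair (pi1 I Uo) f0) (reidx (pi1 I V) (ex1 E (all1 U phi)))).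
      * apply reidx_mono. apply (ex1_adj E). apply ple_refl.
      * rewrite <- reidx_comp, pi1_pair. apply ple_refl.
Qed.
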